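(* Let $I$ be an index set. For each $i\in I$ let $(X_i,\le_i)$ be a poset and $E_i$ an equivalence relation on $X_i$ with ${\le_i}\subseteq E_i$, and assume $X_i\cap X_j=\varnothing$ for $i\ne j$. Suppose that for each $i\in I$, $\alpha_i:X_i\to X_i$ is an order automorphism of $(X_i,\le_i)$ and $\beta_i:X_i\to X_i$ is a self-inverse dual order automorphism of $(X_i,\le_i)$ with $\alpha_i,\beta_i\subseteq E_i$ and $\beta_i=\alpha_i\circ\beta_i\circ\alpha_i$. Let $X=\bigcup_iX_i$, ${\le}=\bigcup_i{\le_i}$, $E=\bigcup_iE_i$, $\alpha=\bigcup_i\alpha_i$ and $\beta=\bigcup_i\beta_i$ (so $\alpha(x)=\alpha_i(x)$ and $\beta(x)=\beta_i(x)$ for $x\in X_i$). Then: (i) $(X,\le)$ is a poset and $E$ is an equivalence relation on $X$ with ${\le}\subseteq E$; (ii) $\alpha$ is an order automorphism of $(X,\le)$ with $\alpha\subseteq E$; (iii) $\beta$ is a self-inverse dual order automorphism of $(X,\le)$ with $\beta\subseteq E$; (iv) $\beta=\alpha\circ\beta\circ\alpha$; (v) $\mathbf{Dq}(\mathbf E)\cong\prod_{i\in I}\mathbf{Dq}(\mathbf E_i)$.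
   Context: For binary relations: converse $R^\smile$; composition $R\circ S=\{(x,y)\mid\exists z\,((x,z)\in R,(z,y)\in S)\}$. Functions are identified with their graphs. Order automorphism: bijection with $x\le y\iff\alpha(x)\le\alpha(y)$; dual order automorphism: bijection with $x\le y\iff\beta(y)\le\beta(x)$; self-inverse: $\beta\circ\beta=\mathrm{id}$. Given a poset $(Y,\le)$, an equivalence relation $F\supseteq{\le}$ on $Y$, and such $\alpha,\beta\subseteq F$ with $\beta=\alpha\circ\beta\circ\alpha$: $F$ is ordered by $(u,v)\preceq(x,y)$ iff $x\le u$ and $v\le y$, $\mathbf F=(F,\preceq)$; complements are $R^c=F\setminus R$; and $\mathbf{Dq}(\mathbf F)$ is the algebra $\langle\mathsf{Up}(\mathbf F),\cap,\cup,\circ,1,0,{\sim},-,'\rangle$ of up-sets of $\mathbf F$ with $1={\le}$, $0=\alpha\circ({\le}^c)^\smile$, ${\sim}R=(R^\smile\circ0^c)^c$, $-R=(0^c\circ R^\smile)^c$, $R'=\alpha\circ\beta\circ R^c\circ\beta$ (a distributive quasi relation algebra). Here $\mathbf{Dq}(\mathbf E_i)$ is formed with $\le_i,\alpha_i,\beta_i$, and $\mathbf{Dq}(\mathbf E)$ with $\le,\alpha,\beta$. *)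

(* Defs.v *)
(* Plain Rocq (no library needed): binary relations on an ambient type T,
   functions identified with their graphs, as in the paper. *)

Definition rel (T : Type) := T -> T -> Prop.

Section Rel.
Variable T : Type.

Definition releq (R S : rel T) : Prop := forall x y, R x y <-> S x y.
Definition subrel (R S : rel T) : Prop := forall x y, R x y -> S x y.

Definition rconv (R : rel T) : rel T := fun x y => R y x.
Definition rcomp (R S : rel T) : rel T := fun x y => exists z, R x z /\ S z y.
Definition rcap (R S : rel T) : rel T := fun x y => R x y /\ S x y.
Definition rcup (R S : rel T) : rel T := fun x y => R x y \/ S x y.
Definition rid (X : T -> Prop) : rel T := fun x y => X x /\ x = y.

Definition is_poset (X : T -> Prop) (le : rel T) : Prop :=
  (forall x y, le x y -> X x /\ X y) /\
  (forall x, X x -> le x x) /\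
  (forall x y, le x y -> le y x -> x = y) /\
  (forall x y z, le x y -> le y z -> le x z).

Definition is_equiv_on (X : T -> Prop) (E : rel T) : Prop :=
  (forall x y, E x y -> X x /\ X y) /\
  (forall x, X x -> E x x) /\
  (forall x y, E x y -> E y x) /\
  (forall x y z, E x y -> E y z -> E x z).

Definition is_fun_on (X : T -> Prop) (f : rel T) : Prop :=
  (forall x y, f x y -> X x /\ X y) /\
  (forall x, X x -> exists y, f x y /\ forall y', f x y' -> y' = y).

Definition is_bij_on (X : T -> Prop) (f : rel T) : Prop :=
  is_fun_on X f /\
  (forall y, X y -> exists x, f x y /\ forall x', f x' y -> x' = x).

Definition order_aut (X : T -> Prop) (le : rel T) (f : rel T) : Prop :=
  is_bij_on X f /\
  (forall x y fx fy, f x fx -> f y fy -> (le x y <-> le fx fy)).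

Definition dual_order_aut (X : T -> Prop) (le : rel T) (f : rel T) : Prop :=
  is_bij_on X f /\
  (forall x y fx fy, f x fx -> f y fy -> (le x y <-> le fy fx)).

Definition self_inverse (X : T -> Prop) (f : rel T) : Prop :=
  releq (rcomp f f) (rid X).

Definition rcompl (F R : rel T) : rel T := fun x y => F x y /\ ~ R x y.

(* up-sets of (F, \preceq) where (u,v) \preceq (x,y) iff x <= u and v <= y *)
Definition is_upset (le F R : rel T) : Prop :=
  subrel R F /\
  (forall u v x y, R u v -> le x u -> le v y -> F x y -> R x y).

Definition Dq_one (le : rel T) : rel T := le.
Definition Dq_zero (le alpha F : rel T) : rel T :=
  rcomp alpha (rconv (rcompl F le)).
Definition Dq_tilde (le alpha F R : rel T) : rel T :=
  rcompl F (rcomp (rconv R) (rcompl F (Dq_zero le alpha F))).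
Definition Dq_minus (le alpha F R : rel T) : rel T :=
  rcompl F (rcomp (rcompl F (Dq_zero le alpha F)) (rconv R)).
Definition Dq_prime (alpha beta F R : rel T) : rel T :=
  rcomp alpha (rcomp beta (rcomp (rcompl F R) beta)).

End Rel.

Arguments releq {T}. Arguments subrel {T}. Arguments rconv {T}.
Arguments rcomp {T}. Arguments rcap {T}. Arguments rcup {T}. Arguments rid {T}.
Arguments is_poset {T}. Arguments is_equiv_on {T}. Arguments is_fun_on {T}.
Arguments is_bij_on {T}. Arguments order_aut {T}. Arguments dual_order_aut {T}.
Arguments self_inverse {T}. Arguments rcompl {T}. Arguments is_upset {T}.
Arguments Dq_one {T}. Arguments Dq_zero {T}. Arguments Dq_tilde {T}.
Arguments Dq_minus {T}. Arguments Dq_prime {T}.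

(* Dq(F) for the data (le, alpha, beta, F) is isomorphic to the product over
   i : I of Dq(F_i) for the data (le_i, alpha_i, beta_i, F_i):
   there is a map phi from up-sets of F to I-indexed families that sends
   up-sets to families of up-sets, is a bijection between the two carriers
   (elements compared extensionally as sets of pairs) and preserves
   cap, cup, composition, 1, 0, ~, -, ' (operations of the product computed
   componentwise). *)
Definition Dq_iso_prod {T I : Type}
    (le alpha beta F : rel T)
    (lei alphai betai Fi : I -> rel T) : Prop :=
  exists phi : rel T -> I -> rel T,
    (forall R, is_upset le F R -> forall i, is_upset (lei i) (Fi i) (phi R i)) /\
    (forall R S, is_upset le F R -> is_upset le F S ->
       (forall i, releq (phi R i) (phi S i)) -> releq R S) /\
    (forall G : I -> rel T, (forall i, is_upset (lei i) (Fi i) (G i)) ->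
       exists R, is_upset le F R /\ forall i, releq (phi R i) (G i)) /\
    (forall R S, is_upset le F R -> is_upset le F S -> forall i,
       releq (phi (rcap R S) i) (rcap (phi R i) (phi S i))) /\
    (forall R S, is_upset le F R -> is_upset le F S -> forall i,
       releq (phi (rcup R S) i) (rcup (phi R i) (phi S i))) /\
    (forall R S, is_upset le F R -> is_upset le F S -> forall i,
       releq (phi (rcomp R S) i) (rcomp (phi R i) (phi S i))) /\
    (forall i, releq (phi (Dq_one le) i) (Dq_one (lei i))) /\
    (forall i, releq (phi (Dq_zero le alpha F) i)
                     (Dq_zero (lei i) (alphai i) (Fi i))) /\
    (forall R, is_upset le F R -> forall i,
       releq (phi (Dq_tilde le alpha F R) i)
             (Dq_tilde (lei i) (alphai i) (Fi i) (phi R i))) /\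
    (forall R, is_upset le F R -> forall i,
       releq (phi (Dq_minus le alpha F R) i)
             (Dq_minus (lei i) (alphai i) (Fi i) (phi R i))) /\
    (forall R, is_upset le F R -> forall i,
       releq (phi (Dq_prime alpha beta F R) i)
             (Dq_prime (alphai i) (betai i) (Fi i) (phi R i))).

Definition bigU {T I : Type} (X : I -> T -> Prop) : T -> Prop :=
  fun x => exists i, X i x.
Definition bigUr {T I : Type} (R : I -> rel T) : rel T :=
  fun x y => exists i, R i x y.

(* Main.v *)
Require Import Defs.
From Stdlib Require Import Classical.

Ltac sat :=
  repeat match goal with
  | H : exists _, _ |- _ => let i := fresh "i" in destruct H as [i H]
  | H : _ /\ _ |- _ => destruct H
  | H : ?R ?i ?x ?y, D : forall a b c, ?R a b c -> ?X a b /\ ?X a c |- _ =>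
      lazymatch goal with
      | _ : X i x, _ : X i y |- _ => fail
      | _ => destruct (D _ _ _ H)
      end
  | H1 : ?X ?i ?x, H2 : ?X ?j ?x, S : forall a b c, ?X a c -> ?X b c -> a = b |- _ =>
      tryif constr_eq i j then fail else (pose proof (S _ _ _ H1 H2); subst)
  end.

Theorem theorem4p1 (T I : Type) (X : I -> T -> Prop)
  (le E alpha beta : I -> rel T)
  (Hposet : forall i, is_poset (X i) (le i))
  (Hequiv : forall i, is_equiv_on (X i) (E i))
  (HleE : forall i, subrel (le i) (E i))
  (Hdisj : forall i j x, i <> j -> X i x -> X j x -> False)
  (Halpha : forall i, order_aut (X i) (le i) (alpha i))
  (Hbeta : forall i, dual_order_aut (X i) (le i) (beta i))
  (Hbeta_inv : forall i, self_inverse (X i) (beta i))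
  (HalphaE : forall i, subrel (alpha i) (E i))
  (HbetaE : forall i, subrel (beta i) (E i))
  (Hbab : forall i, releq (beta i) (rcomp (alpha i) (rcomp (beta i) (alpha i)))) :
  let X0 := bigU X in
  let le0 := bigUr le in
  let E0 := bigUr E in
  let alpha0 := bigUr alpha in
  let beta0 := bigUr beta in
  (* (i) *)
  (is_poset X0 le0 /\ is_equiv_on X0 E0 /\ subrel le0 E0) /\
  (* (ii) *)
  (order_aut X0 le0 alpha0 /\ subrel alpha0 E0) /\
  (* (iii) *)
  (dual_order_aut X0 le0 beta0 /\ self_inverse X0 beta0 /\ subrel beta0 E0) /\
  (* (iv) *)
  releq beta0 (rcomp alpha0 (rcomp beta0 alpha0)) /\
  (* (v) *)
  Dq_iso_prod le0 alpha0 beta0 E0 le alpha beta E.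
Proof.
  assert (same : forall i j x, X i x -> X j x -> i = j).
  { intros i j x H1 H2. destruct (classic (i = j)) as [e|n]; [exact e|].
    exfalso; exact (Hdisj i j x n H1 H2). }
  assert (Hle_dom : forall i x y, le i x y -> X i x /\ X i y)
    by (intros i; apply (Hposet i)).
  assert (HE_dom : forall i x y, E i x y -> X i x /\ X i y)
    by (intros i; apply (Hequiv i)).
  assert (Ha_dom : forall i x y, alpha i x y -> X i x /\ X i y)
    by (intros i; apply (Halpha i)).
  assert (Hb_dom : forall i x y, beta i x y -> X i x /\ X i y)
    by (intros i; apply (Hbeta i)).
  assert (Erefl : forall i x, X i x -> E i x x) by (intros i; apply (Hequiv i)).
  assert (Esym : forall i x y, E i x y -> E i y x) by (intros i; apply (Hequiv i)).
  assert (Etrans : forall i x y z, E i x y -> E i y z -> E i x z) by (intros i; apply (Hequiv i)).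
  assert (Lrefl : forall i x, X i x -> le i x x) by (intros i; apply (Hposet i)).
  assert (Lanti : forall i x y, le i x y -> le i y x -> x = y) by (intros i; apply (Hposet i)).
  assert (Ltrans : forall i x y z, le i x y -> le i y z -> le i x z) by (intros i; apply (Hposet i)).
  assert (Afun : forall i x, X i x -> exists y, alpha i x y /\ forall y', alpha i x y' -> y' = y) by (intros i; apply (Halpha i)).
  assert (Asur : forall i y, X i y -> exists x, alpha i x y /\ forall x', alpha i x' y -> x' = x) by (intros i; apply (Halpha i)).
  assert (Aord : forall i x y fx fy, alpha i x fx -> alpha i y fy -> (le i x y <-> le i fx fy)) by (intros i; apply (Halpha i)).
  assert (Bfun : forall i x, X i x -> exists y, beta i x y /\ forall y', beta i x y' -> y' = y) by (intros i; apply (Hbeta i)).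
  assert (Bsur : forall i y, X i y -> exists x, beta i x y /\ forall x', beta i x' y -> x' = x) by (intros i; apply (Hbeta i)).
  assert (Bord : forall i x y fx fy, beta i x fx -> beta i y fy -> (le i x y <-> le i fy fx)) by (intros i; apply (Hbeta i)).
  clear Hposet Hequiv Halpha Hbeta Hdisj.
  intros X0 le0 E0 alpha0 beta0.
  unfold X0, le0, E0, alpha0, beta0, bigU, bigUr in *.
  clear X0 le0 E0 alpha0 beta0.
  split; [|split; [|split; [|split]]].
  - split; [|split].
    + unfold is_poset; split; [|split; [|split]]; intros; sat.
      * split; eexists; eauto.
      * eexists; eauto.
      * eauto.
      * eexists; eauto.
    + unfold is_equiv_on; split; [|split; [|split]]; intros; sat.
      * split; eexists; eauto.
      * eexists; eauto.
      * eexists; eauto.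
      * eexists; eauto.
    + intros x y H; sat; eexists; apply HleE; eauto.
  - split.
    + split; [split; [split|]|].
      * intros; sat; split; eexists; eauto.
      * intros x H; sat. destruct (Afun _ _ H) as [y [H1 H2]].
        exists y; split; [eexists; eauto|]. intros y' H3; sat; eauto.
      * intros y H; sat. destruct (Asur _ _ H) as [x [H1 H2]].
        exists x; split; [eexists; eauto|]. intros x' H3; sat; eauto.
      * intros x y fx fy H1 H2; sat; split; intros; sat; eexists; match goal with A: alpha ?k ?a ?fa, B: alpha ?k ?b ?fb |- le _ ?fa ?fb => apply (proj1 (Aord k a b fa fb A B)); assumption | A: alpha ?k ?a ?fa, B: alpha ?k ?b ?fb |- le _ ?a ?b => apply (proj2 (Aord k a b fa fb A B)); assumption end.
    + intros x y H; sat; eexists; apply HalphaE; eauto.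
  - split; [|split].
    + split; [split; [split|]|].
      * intros; sat; split; eexists; eauto.
      * intros x H; sat. destruct (Bfun _ _ H) as [y [H1 H2]].
        exists y; split; [eexists; eauto|]. intros y' H3; sat; eauto.
      * intros y H; sat. destruct (Bsur _ _ H) as [x [H1 H2]].
        exists x; split; [eexists; eauto|]. intros x' H3; sat; eauto.
      * intros x y fx fy H1 H2; sat; split; intros; sat; eexists; match goal with A: beta ?k ?a ?fa, B: beta ?k ?b ?fb |- le _ ?fb ?fa => apply (proj1 (Bord k a b fa fb A B)); assumption | A: beta ?k ?a ?fa, B: beta ?k ?b ?fb |- le _ ?a ?b => apply (proj2 (Bord k a b fa fb A B)); assumption end.
    + intros x y; unfold rcomp, rid; split; intros H; sat.
      * match goal with A: beta ?k x ?z, B: beta ?k ?z y |- _ =>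
          destruct (proj1 (Hbeta_inv k x y) (ex_intro _ z (conj A B))) end.
        split; [eexists|]; eauto.
      * subst. match goal with A : X ?k y |- _ =>
          destruct (proj2 (Hbeta_inv k y y) (conj A eq_refl)) as [z [? ?]] end.
        exists z; split; eexists; eauto.
    + intros x y H; sat; eexists; apply HbetaE; eauto.
  - intros x y; unfold rcomp; split; intros H; sat.
    + match goal with A : beta ?k x y |- _ =>
        destruct (proj1 (Hbab k x y) A) as [a [? [b [? ?]]]] end.
      exists a; split; [eexists; eauto|]; exists b; split; eexists; eauto.
    + eexists; apply Hbab; unfold rcomp; eauto 7.
  - assert (Zeq : forall i x y,
      rcap (Dq_zero (fun x y => exists i, le i x y) (fun x y => exists i, alpha i x y)
                    (fun x y => exists i, E i x y)) (E i) x y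
      <-> Dq_zero (le i) (alpha i) (E i) x y).
    { intros i x y; unfold rcap, Dq_zero, rcomp, rconv, rcompl; split; intros H; sat.
      - eexists; split; [eassumption|]. split; [assumption|]. intro; eauto.
      - split; [eexists; split; [eexists; eassumption|]|].
        + split; [eexists; eassumption|]. intros [k Hk]; sat; eauto.
        + eapply Etrans; [apply HalphaE; eassumption|]. apply Esym; assumption. }
    exists (fun R i => rcap R (E i)).
    split; [|split; [|split; [|split; [|split; [|split; [|split; [|split; [|split; [|split]]]]]]]]].
    + intros R [HRF HRu] i; split.
      * intros x y [? ?]; assumption.
      * intros u v x y [Huv Ei] Hxu Hvy Exy; split; [|assumption].
        apply (HRu u v); eauto; eexists; eassumption.
    + intros R S [HRF _] [HSF _] H x y; split; intros Hxy.
      * destruct (HRF _ _ Hxy) as [k Hk]. apply (H k); split; assumption.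
      * destruct (HSF _ _ Hxy) as [k Hk]. apply (H k); split; assumption.
    + intros G HG. exists (fun x y => exists i, G i x y). split.
      * split.
        -- intros x y [i Hi]. exists i. apply (HG i); assumption.
        -- intros u v x y [i Hi] [j Hj] [k Hk] [l Hl].
           pose proof (proj1 (HG i) _ _ Hi). sat.
           eexists. apply (proj2 (HG _) u v); eassumption.
      * intros i x y; unfold rcap; split; intros H; sat.
        -- pose proof (proj1 (HG i0) _ _ H). sat. assumption.
        -- split; [eexists; eassumption|]. apply (HG i); assumption.
    + intros R S _ _ i x y; unfold rcap; tauto.
    + intros R S _ _ i x y; unfold rcap, rcup; tauto.
    + intros R S [HRF _] [HSF _] i x y; unfold rcap, rcomp; split; intros H; sat.
      * destruct (HRF _ _ H) as [k Hk]. destruct (HSF _ _ H1) as [l Hl]. sat.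
        eexists; split; split; eauto.
      * split; [eexists; split; eassumption|]. eauto.
    + intros i x y; unfold rcap, Dq_one; split; intros H; sat; [assumption|].
      split; [eexists; eassumption| apply HleE; assumption].
    + intros i x y; apply Zeq.
    + intros R [HRF _] i x y; unfold Dq_tilde; unfold rcap, rcompl, rcomp, rconv.
      split; intros H; sat.
      * split; [assumption|]. intros [z [[Hzx Ezx] [Ezy nZ]]]. match goal with Hn : ~ (exists _, _) |- _ => apply Hn end.
        exists z; split; [assumption|]. split; [eexists; eassumption|].
        intro HZ. apply nZ. apply Zeq. split; assumption.
      * split; [split; [eexists; eassumption|]|assumption].
        intros [z [Hzx [[k Ezy] nZ]]]. destruct (HRF _ _ Hzx) as [l El]. sat.
        match goal with Hn : ~ (exists _, _) |- _ => apply Hn end. exists z; split; [split; [assumption|]|split; [assumption|]].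
        -- assumption.
        -- intro HZ. apply nZ. apply (proj2 (Zeq _ _ _) HZ).
    + intros R [HRF _] i x y; unfold Dq_minus; unfold rcap, rcompl, rcomp, rconv.
      split; intros H; sat.
      * split; [assumption|]. intros [z [[Exz nZ] [Hyz Eyz]]]. match goal with Hn : ~ (exists _, _) |- _ => apply Hn end.
        exists z; split; [|assumption]. split; [eexists; eassumption|].
        intro HZ. apply nZ. apply Zeq. split; assumption.
      * split; [split; [eexists; eassumption|]|assumption].
        intros [z [[[k Exz] nZ] Hyz]]. destruct (HRF _ _ Hyz) as [l El]. sat.
        match goal with Hn : ~ (exists _, _) |- _ => apply Hn end. exists z; split; [split; [assumption|]|split; [assumption|]].
        -- intro HZ. apply nZ. apply (proj2 (Zeq _ _ _) HZ).
        -- assumption.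
    + intros R [HRF _] i x y; unfold Dq_prime, rcap, rcompl, rcomp.
      split; intros H; sat.
      * eexists; split; [eassumption|]. eexists; split; [eassumption|].
        eexists; split; [|eassumption]. split; [assumption|]. tauto.
      * split.
        -- eexists; split; [eexists; eassumption|]. eexists; split; [eexists; eassumption|].
           eexists; split; [|eexists; eassumption]. split; [eexists; eassumption|].
           intro; eauto.
        -- eapply Etrans; [apply HalphaE; eassumption|].
           eapply Etrans; [apply HbetaE; eassumption|].
           eapply Etrans; [eassumption|]. apply HbetaE; eassumption.
Qed.
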